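(* Let $(X,S)$ be an association scheme of order $n>1$ and let $H$ be an $n\times n$ Hadamard matrix whose rows and columns are indexed by the elements of $X$. Then $(\widetilde{X}, S(H))$ is an association scheme, where $\widetilde X$ and $S(H)$ are as defined in the context.
   Context: An association scheme $(X,S)$ consists of a non-empty finite set $X$ and a partition $S$ of $X\times X$ such that: $1_X:=\{(\alpha,\alpha)\mid \alpha\in X\}\in S$; for each $s\in S$, $s^*:=\{(\alpha,\beta)\mid(\beta,\alpha)\in s\}\in S$; and for all $s,t,u\in S$ the number $|\alpha s\cap \beta t^*|$ is constant for $(\alpha,\beta)\in u$, where $\alpha s:=\{\beta\mid(\alpha,\beta)\in s\}$. Its order is $|X|$. $\mathbb{F}_2$ is the field with two elements, and $x_{ab}$ denotes the element $(x,a,b)$ of $X\times\mathbb{F}_2\times\mathbb{F}_2$. For a matrix $H$ indexed by $X$, let $H^{T(0)}=H$ and $H^{T(1)}=H^T$ (transpose), and let $\delta_{ac}=1$ if $a=c$ and $0$ otherwise. Define $\widetilde X=\{x_{ab}\mid x\in X,\ a,b\in\mathbb{F}_2\}$; $\widetilde t=\{(x_{ab},x_{a(b+1)})\mid x\in X,\ a,b\in\mathbb{F}_2\}$; for $s\in S\setminus\{1_X\}$, $\widetilde s=\{(x_{ab},y_{ac})\mid (x,y)\in s,\ a,b,c\in\mathbb{F}_2\}$; $r^1_H=\{(x_{ab},y_{cd})\mid x,y\in X,\ a,b,c,d\in\mathbb{F}_2,\ (1-\delta_{ac})(H^{T(a)})_{xy}=(-1)^{b+d}\}$; $r^{-1}_H=\{(x_{ab},y_{cd})\mid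 x,y\in X,\ a,b,c,d\in\mathbb{F}_2,\ a\ne c\}\setminus r^1_H$; $S(H)=\{1_{\widetilde X},\widetilde t\}\cup\{\widetilde s\mid s\in S\setminus\{1_X\}\}\cup\{r^1_H,r^{-1}_H\}$. *)

(* Defs.v *)
From HB Require Import structures.
From mathcomp Require Import all_boot all_order all_algebra.
Set Implicit Arguments. Unset Strict Implicit. Unset Printing Implicit Defensive.
Import Order.TTheory GRing.Theory Num.Theory.
Local Open Scope ring_scope.

Section Scheme.
Variable X : finType.

Definition diagX : {set X * X} := [set p | p.1 == p.2].

Definition transp (s : {set X * X}) : {set X * X} :=
  [set p | (p.2, p.1) \in s].

Definition nbhd (s : {set X * X}) (a : X) : {set X} := [set b | (a, b) \in s].

Definition is_assoc_scheme (S : {set {set X * X}}) : Prop :=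
  [/\ partition S [set: X * X],
      diagX \in S,
      (forall s, s \in S -> transp s \in S) &
      (forall s t u, s \in S -> t \in S -> u \in S ->
         exists c : nat, forall a b, (a, b) \in u ->
           #|nbhd s a :&: nbhd (transp t) b| = c)].

Definition is_hadamard (H : X -> X -> int) : Prop :=
  (forall x y, H x y = 1 \/ H x y = -1) /\
  (forall x y, \sum_(z : X) H x z * H y z = ((x == y)%:R * #|X|%:R)%R).

(* F_2 is represented by bool, with + being addb (xor). x_{ab} = (x,a,b). *)
Definition tX := (X * bool * bool)%type.

Definition HT (H : X -> X -> int) (a : bool) (x y : X) : int :=
  if a then H y x else H x y.

Definition tdiag : {set tX * tX} := [set p | p.1 == p.2].

Definition t_rel : {set tX * tX} :=
  [set p | let: ((x, a, b), (y, c, d)) := p in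
           [&& y == x, c == a & d == addb b true]].

Definition tilde_rel (s : {set X * X}) : {set tX * tX} :=
  [set p | let: ((x, a, b), (y, c, d)) := p in ((x, y) \in s) && (c == a)].

Definition r1 (H : X -> X -> int) : {set tX * tX} :=
  [set p | let: ((x, a, b), (y, c, d)) := p in
     (1 - (a == c)%:R) * HT H a x y == (-1) ^+ (addb b d)].

Definition rm1 (H : X -> X -> int) : {set tX * tX} :=
  [set p | let: ((x, a, b), (y, c, d)) := p in a != c] :\: r1 H.

Definition SH (S : {set {set X * X}}) (H : X -> X -> int) : {set {set tX * tX}} :=
  [set tdiag; t_rel; r1 H; rm1 H] :|: [set tilde_rel s | s in S :\ diagX].

End Scheme.

(* Main.v *)
Require Import Defs.
From HB Require Import structures.
From mathcomp Require Import all_boot all_order all_algebra.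
Import Order.TTheory GRing.Theory Num.Theory.
Local Open Scope ring_scope.
Set Implicit Arguments. Unset Strict Implicit.
From mathcomp Require Import zify.
Section A.
Variable X : finType.
Variable H : X -> X -> int.
Lemma sum_reidx (F : X -> rat) : \sum_(z : X) F z = \sum_(i < #|(xpredT : pred X)|) F (enum_val i).
Proof. by rewrite -big_enum_val. Qed.
Lemma col_ortho : (forall x y, \sum_(z : X) H x z * H y z = ((x == y)%:R * #|X|%:R)) ->
  forall x y, \sum_(z : X) H z x * H z y = ((x == y)%:R * #|X|%:R).
Proof.
move=> hr x y.
pose n := #|X|.
have n0 : (n%:R : rat) != 0.
  rewrite pnatr_eq0 -lt0n; apply/card_gt0P; by exists x.
pose M : 'M[rat]_n := \matrix_(i, j) (H (enum_val i) (enum_val j))%:~R.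
have h1 : (n%:R^-1 *: M) *m M^T = 1%:M.
  apply/matrixP => i j; rewrite -scalemxAl !mxE.
  rewrite (eq_bigr (fun k => ((H (enum_val i) (enum_val k) * H (enum_val j) (enum_val k))%:~R))); last first.
    by move=> k _; rewrite !mxE intrM.
  rewrite (_ : \sum_(k < n) _ = \sum_z ((H (enum_val i) z * H (enum_val j) z)%:~R : rat)); last first.
    by rewrite sum_reidx.
  rewrite -rmorph_sum hr (inj_eq enum_val_inj) rmorphM /= !mulrz_nat.
  rewrite mulrCA mulVf // mulr1.
  by case: eqP.
have h2 := mulmx1C h1.
have := congr1 (fun A : 'M[rat]_n => A (enum_rank x) (enum_rank y)) h2.
rewrite -scalemxAr !mxE.
rewrite (eq_bigr (fun k => ((H (enum_val k) x * H (enum_val k) y)%:~R))); last first.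
  by move=> k _; rewrite !mxE !enum_rankK intrM.
rewrite (_ : \sum_(k < n) _ = \sum_z ((H z x * H z y)%:~R : rat)); last first.
    by rewrite sum_reidx.
rewrite -rmorph_sum (inj_eq enum_rank_inj) => h.
apply: (@intr_inj rat).
rewrite (_ : _%:~R = n%:R * (x == y)%:R); last by rewrite -h mulrA divff // mul1r.
by rewrite rmorphM /= !mulrz_nat mulrC.
Qed.
End A.

Section Main.
Variables (X : finType) (S : {set {set X * X}}) (H : X -> X -> int).
Hypothesis hn : (1 < #|X|)%N.
Hypothesis hS : is_assoc_scheme S.
Hypothesis hH : is_hadamard H.

Local Notation T := (tX X).

Definition sg (h : int) : bool := h == -1.

Lemma HTpm a x y : HT H a x y = 1 \/ HT H a x y = -1.
Proof. by case: a; rewrite /HT; apply hH.1. Qed.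

Lemma sg_exp h (k : bool) : (h = 1 \/ h = -1) -> (h == (-1)^+k) = (sg h == k).
Proof. by case: k => -[] ->. Qed.

Definition Tr (e : bool) : {set T * T} := [set p | let: ((x, a, b), (y, c, d)) := p in
  [&& y == x, c == a & d == addb b e]].
Definition Rr (e : bool) : {set T * T} := [set p | let: ((x, a, b), (y, c, d)) := p in
  (a != c) && (sg (HT H a x y) == addb (addb b d) e)].

Lemma tdiagE : tdiag X = Tr false.
Proof.
apply/setP => -[[[x a] b] [[y c] d]]; rewrite !inE /= addbF.
by rewrite !xpair_eqE (eq_sym x) (eq_sym a) (eq_sym b) andbA.
Qed.

Lemma t_relE : t_rel X = Tr true.
Proof. by []. Qed.

Lemma r1E : r1 H = Rr false.
Proof.
apply/setP => -[[[x a] b] [[y c] d]]; rewrite !inE /= addbF.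
case: (eqVneq a c) => [->|ne] /=; rewrite ?eqxx ?(negPf ne) /=.
  by rewrite subrr mul0r; case: (addb b d).
by rewrite subr0 mul1r sg_exp //; apply: HTpm.
Qed.

Lemma rm1E : rm1 H = Rr true.
Proof.
apply/setP => -[[[x a] b] [[y c] d]]; rewrite !inE /=.
case: (eqVneq a c) => [->|ne] /=; rewrite ?eqxx ?(negPf ne) /=.
  by rewrite subrr mul0r andbF.
rewrite subr0 mul1r sg_exp; last by apply: HTpm.
by rewrite andbT; case: (sg _); case: (addb b d).
Qed.

Definition kinded (R : {set T * T}) := (exists e, R = Tr e) \/ (exists e, R = Rr e) \/
  (exists2 v, v \in S :\ diagX X & R = tilde_rel v).

Lemma SH_kinded R : R \in SH S H -> kinded R.
Proof.
rewrite /SH !inE => /orP[/orP[/orP[/orP[]|]|]|] .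
- move/eqP->; left; exists false; exact: tdiagE.
- move/eqP->; left; exists true; exact: t_relE.
- move/eqP->; right; left; exists false; exact: r1E.
- move/eqP->; right; left; exists true; exact: rm1E.
- by case/imsetP => v hv ->; right; right; exists v.
Qed.

Lemma kinded_SH R : kinded R -> R \in SH S H.
Proof.
rewrite /SH !inE.
case=> [[[] ->]|[[[] ->]|[v hv ->]]].
- by rewrite -t_relE eqxx !orbT.
- by rewrite -tdiagE eqxx.
- by rewrite -rm1E eqxx !orbT.
- by rewrite -r1E eqxx !orbT.
- by apply/orP; right; apply/imsetP; exists v.
Qed.


Lemma transpK (v : {set X * X}) : transp (transp v) = v.
Proof. by apply/setP => -[x y]; rewrite !inE. Qed.

Section SchemeFacts.
Let hpart := let: And4 h _ _ _ := hS in h.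
Let hdiag := let: And4 _ h _ _ := hS in h.
Let htr := let: And4 _ _ h _ := hS in h.
Let hint := let: And4 _ _ _ h := hS in h.

Lemma S_diag : diagX X \in S. Proof. exact: hdiag. Qed.
Lemma S_tr v : v \in S -> transp v \in S. Proof. exact: htr. Qed.

Lemma S_cover p : exists2 v, v \in S & p \in v.
Proof.
move/and3P: hpart => [/eqP hcov _ _].
have : p \in cover S by rewrite hcov inE.
by case/bigcupP => v hv hp; exists v.
Qed.

Lemma S_uniq v w p : v \in S -> w \in S -> p \in v -> p \in w -> v = w.
Proof.
move/and3P: hpart => [_ htriv _] hv hw pv pw.
apply/eqP; apply: contraT => ne.
have := disjoint_setI0 (trivIsetP htriv v w hv hw ne).
by move/setP/(_ p); rewrite !inE pv pw.
Qed.

Lemma S_ne0 v : v \in S -> exists p, p \in v.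
Proof.
move/and3P: hpart => [_ _ h0] hv.
have : v != set0 by apply: contraNneq h0 => <-.
by case/set0Pn => p hp; exists p.
Qed.

Lemma S_nondiag v x : v \in S -> v != diagX X -> (x, x) \notin v.
Proof.
move=> hv hne; apply/negP => hx; move/eqP: hne; apply.
apply: (S_uniq hv S_diag hx); by rewrite inE.
Qed.

Lemma val_out v : v \in S -> exists k, forall x, #|[set z | (x, z) \in v]| = k.
Proof.
move=> hv; have [c hc] := hint hv (S_tr hv) S_diag.
exists c => x; rewrite -(hc x x); last by rewrite inE.
by rewrite transpK setIid.
Qed.

Lemma val_in v : v \in S -> exists k, forall y, #|[set z | (z, y) \in v]| = k.
Proof.
move=> hv; have [c hc] := hint (S_tr hv) hv S_diag.
exists c => y; rewrite -(hc y y); last by rewrite inE.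
rewrite setIid; apply: eq_card => z; by rewrite !inE.
Qed.

Lemma inter_S v1 v2 w : v1 \in S -> v2 \in S -> w \in S ->
  exists c, forall x y, (x, y) \in w -> #|[set z | ((x, z) \in v1) && ((z, y) \in v2)]| = c.
Proof.
move=> h1 h2 hw; have [c hc] := hint h1 h2 hw.
exists c => x y hxy; rewrite -(hc x y hxy).
apply: eq_card => z; by rewrite !inE.
Qed.
End SchemeFacts.

Lemma sum_bool (P : pred X) : (\sum_z (P z : nat) = #|[set z | P z]|)%N.
Proof.
rewrite -sum1dep_card [RHS]big_mkcond; apply: eq_bigr => z _; by case: (P z).
Qed.

Lemma ortho a x y : \sum_z HT H a x z * HT H a y z = (x == y)%:R * #|X|%:R.
Proof.
case: a; rewrite /HT; last exact: hH.2.
by apply: col_ortho; exact: hH.2.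
Qed.

Lemma count_ortho a x y (k : bool) : x != y ->
  (#|[set z | addb (sg (HT H a x z)) (sg (HT H a y z)) == k]|).*2 = #|X|.
Proof.
move=> ne.
pose P z := addb (sg (HT H a x z)) (sg (HT H a y z)).
have e1 : forall z, HT H a x z * HT H a y z + 2 * (P z)%:R = 1.
  by move=> z; rewrite /P; case: (HTpm a x z) => ->; case: (HTpm a y z) => ->.
have e2 : \sum_z (HT H a x z * HT H a y z + 2 * (P z)%:R) = #|X|%:R.
  rewrite (eq_bigr (fun _ => (1 : int))); last by move=> z _; rewrite e1.
  by rewrite sumr_const.
rewrite big_split /= ortho (negPf ne) mul0r add0r -mulr_sumr -natr_sum sum_bool in e2.
have e3 : (#|[set z | P z]|.*2 = #|X|)%N.
  by apply/eqP; rewrite -(eqr_nat int) -e2 -muln2 natrM mulrC.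
have hc : #|[set z | ~~ P z]| = #|~: [set z | P z]|.
  by apply: eq_card => z; rewrite !inE.
have := cardsC [set z | P z]; rewrite -hc => hc2.
case: k.
  rewrite -e3; congr (_.*2); apply: eq_card => z; by rewrite !inE eqb_id.
rewrite (eq_card (B := [set z | ~~ P z])); last by move=> z; rewrite !inE eqbF_neg.
move: e3 hc2; rewrite -!muln2 cardT => e3 hc2. lia.
Qed.


Lemma sum_boolT (I : finType) (P : pred I) : (\sum_i (P i : nat) = #|[set i | P i]|)%N.
Proof.
rewrite -sum1dep_card [RHS]big_mkcond; apply: eq_bigr => z _; by case: (P z).
Qed.

Definition N (s t : {set T * T}) (p : T * T) := #|nbhd s p.1 :&: nbhd (transp t) p.2|.

Lemma N_sum s t x a b y a' d : N s t ((x, a, b), (y, a', d)) =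
  (\sum_z \sum_(c : bool) \sum_(f : bool)
     ((((x, a, b), (z, c, f)) \in s) && (((z, c, f), (y, a', d)) \in t)))%N.
Proof.
rewrite pair_bigA pair_bigA sum_boolT /N; apply: eq_card => -[[z c] f].
by rewrite !inE.
Qed.

Lemma card_setI1 (I : finType) (g : I) (B : {set I}) : #|[set g] :&: B| = (g \in B).
Proof.
case: (boolP (g \in B)) => h.
  have -> : [set g] :&: B = [set g] by apply/setIidPl; rewrite sub1set.
  by rewrite cards1.
have -> : [set g] :&: B = set0.
  by apply/setP => z; rewrite !inE; case: eqP => // ->; rewrite (negPf h).
by rewrite cards0.
Qed.

Lemma N_Tl e t x a b q : N (Tr e) t ((x, a, b), q) = (((x, a, addb b e), q) \in t).
Proof.
rewrite /N /=.
have -> : nbhd (Tr e) (x, a, b) = [set (x, a, addb b e)].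
  apply/setP => -[[z c] f]; rewrite !inE /= !xpair_eqE.
  by rewrite -!andbA.
by rewrite card_setI1 !inE.
Qed.

Lemma N_Tr e s q y a d : N s (Tr e) (q, (y, a, d)) = ((q, (y, a, addb d e)) \in s).
Proof.
rewrite /N /= setIC.
have -> : nbhd (transp (Tr e)) (y, a, d) = [set (y, a, addb d e)].
  apply/setP => -[[z c] f]; rewrite !inE /= !xpair_eqE.
  rewrite -!andbA [y == z]eq_sym [a == c]eq_sym.
  by case: f; case: d; case: e.
by rewrite card_setI1 !inE.
Qed.

Lemma shift_k e t : kinded t -> exists2 t', kinded t' & forall x a b y c d,
  ((((x, a, addb b e), (y, c, d)) \in t) = (((x, a, b), (y, c, d)) \in t')) /\
  ((((x, a, b), (y, c, addb d e)) \in t) = (((x, a, b), (y, c, d)) \in t')).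
Proof.
case=> [[e' ->]|[[e' ->]|[v hv ->]]].
- exists (Tr (addb e' e)); first by left; exists (addb e' e).
  move=> x a b y c d; rewrite !inE /=.
  by split; case: b; case: d; case: e; case: e'.
- exists (Rr (addb e' e)); first by right; left; exists (addb e' e).
  move=> x a b y c d; rewrite !inE /=.
  by split; case: (sg _); case: b; case: d; case: e; case: e'.
- exists (tilde_rel v); first by right; right; exists v.
  by move=> x a b y c d; rewrite !inE.
Qed.

Lemma kind_uniq A B p : kinded A -> kinded B -> p \in A -> p \in B -> A = B.
Proof.
case: p => -[[x a] b] [[y c] d].
case=> [[e ->]|[[e ->]|[v hv ->]]]; case=> [[e' ->]|[[e' ->]|[w hw ->]]];
  rewrite !inE /=.
- case/and3P => _ _ /eqP -> /and3P[_ _ /eqP].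
  by move/(f_equal (addb b)); rewrite !addKb => ->.
- by case/and3P => _ /eqP -> _; rewrite eqxx.
- case/and3P => /eqP -> _ _ /andP[hx _].
  by move: hw; rewrite !inE => /andP[hne hw]; move: (S_nondiag x hw hne); rewrite hx.
- by case/andP => /negPf h _ /and3P[_ /eqP e2 _]; move: h; rewrite e2 eqxx.
- case/andP => _ /eqP -> /andP[_ /eqP].
  by move/(f_equal (addb (addb b d))); rewrite !addKb => ->.
- by case/andP => /negPf h _ /andP[_ /eqP e2]; move: h; rewrite e2 eqxx.
- case/andP => hx _ /and3P[/eqP e1 _ _]; move: hx; rewrite e1 => hx.
  by move: hv; rewrite !inE => /andP[hne hv]; move: (S_nondiag x hv hne); rewrite hx.
- by case/andP => _ /eqP e2 /andP[/negPf h _]; move: h; rewrite e2 eqxx.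
- case/andP => hx _ /andP[hy _].
  move: hv hw; rewrite !inE => /andP[_ hv] /andP[_ hw].
  by rewrite (S_uniq hv hw hx hy).
Qed.


Ltac bcase := repeat match goal with
  | |- context [sg ?t] => case: (sg t)
  | |- context [(?p \in ?v)] => case: (p \in v)
  end.

Lemma F_SS v1 v2 x a b y a' d :
  N (tilde_rel v1) (tilde_rel v2) ((x, a, b), (y, a', d)) =
  ((a' == a) * 2 * #|[set z | ((x, z) \in v1) && ((z, y) \in v2)]|)%N.
Proof.
rewrite N_sum -sum_bool big_distrr /=; apply: eq_bigr => z _.
rewrite !big_bool /= !inE /=.
by case: a; case: a'; bcase.
Qed.

Lemma F_SR v e x a b y a' d :
  N (tilde_rel v) (Rr e) ((x, a, b), (y, a', d)) =
  ((a != a') * #|[set z | (x, z) \in v]|)%N.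
Proof.
rewrite N_sum -sum_bool big_distrr /=; apply: eq_bigr => z _.
rewrite !big_bool /= !inE /=.
by case: a; case: a'; rewrite /HT; bcase; case: d; case: e.
Qed.

Lemma F_RS v e x a b y a' d :
  N (Rr e) (tilde_rel v) ((x, a, b), (y, a', d)) =
  ((a != a') * #|[set z | (z, y) \in v]|)%N.
Proof.
rewrite N_sum -sum_bool big_distrr /=; apply: eq_bigr => z _.
rewrite !big_bool /= !inE /=.
by case: a; case: a'; rewrite /HT; bcase; case: b; case: e.
Qed.

Lemma F_RR e e' x a b y a' d :
  N (Rr e) (Rr e') ((x, a, b), (y, a', d)) =
  ((a == a') * #|[set z | addb (sg (HT H a x z)) (sg (HT H a y z)) ==
                          addb (addb b d) (addb e e')]|)%N.
Proof.
rewrite N_sum -sum_bool big_distrr /=; apply: eq_bigr => z _.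
rewrite !big_bool /= !inE /=.
by case: a; case: a'; rewrite /HT; bcase; case: b; case: d; case: e; case: e'.
Qed.


Lemma inter_k s t u : kinded s -> kinded t -> kinded u ->
  exists c, forall p, p \in u -> N s t p = c.
Proof.
move=> ks kt ku.
have det : forall t', kinded t' -> exists c, forall p, p \in u -> ((p \in t') : nat) = c.
  move=> t' kt'; exists (t' == u) => p pu; case: (boolP (p \in t')) => pt'.
    by rewrite (kind_uniq kt' ku pt' pu) eqxx.
  suff -> : (t' == u) = false by [].
  by apply/negbTE; apply: contraNneq pt' => ->.
case: ks => [[e ->]|ks].
  have [t' kt' ht'] := shift_k e kt; have [c hc] := det t' kt'.
  exists c => -[[[x a] b] [[y a'] d]] pu.
  by rewrite N_Tl (ht' x a b y a' d).1; exact: hc.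
case: kt => [[e ->]|kt].
  have [s' ks' hs'] := shift_k e (or_intror ks); have [c hc] := det s' ks'.
  exists c => -[[[x a] b] [[y a'] d]] pu.
  by rewrite N_Tr (hs' x a b y a' d).2; exact: hc.
have hvS : forall v, v \in S :\ diagX X -> v \in S /\ v != diagX X.
  by move=> v; rewrite !inE => /andP[].
case: ks => [[e ->]|[v1 /hvS[hv1 hv1d] ->]];
case: kt => [[e' ->]|[v2 /hvS[hv2 hv2d] ->]];
case: ku => [[e'' ->]|[[e'' ->]|[w /hvS[hw hwd] ->]]].
- exists #|[set z : X | false == addb e'' (addb e e')]| => -[[[x a] b] [[y a'] d]].
  rewrite !inE /= => /and3P[/eqP -> /eqP -> /eqP ->].
  rewrite F_RR eqxx mul1n; apply: eq_card => z; rewrite !inE addbb.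
  by case: b; case: e; case: e'; case: e''.
- exists 0%N => -[[[x a] b] [[y a'] d]].
  by rewrite !inE /= F_RR => /andP[/negPf -> _].
- exists (#|X| %/ 2)%N => -[[[x a] b] [[y a'] d]].
  rewrite !inE /= F_RR => /andP[hxy /eqP ->]; rewrite eqxx mul1n.
  have hne : x != y.
    by apply/eqP => exy; move: hxy; rewrite -exy; apply/negP; exact: S_nondiag.
  have := count_ortho a (addb (addb b d) (addb e e')) hne.
  by move=> h; rewrite -h -muln2 mulnK.
- exists 0%N => -[[[x a] b] [[y a'] d]].
  by rewrite !inE /= F_RS => /and3P[_ /eqP -> _]; rewrite eqxx.
- have [k hk] := val_in hv2.
  exists k => -[[[x a] b] [[y a'] d]].
  by rewrite !inE /= F_RS => /andP[-> _]; rewrite hk mul1n.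
- exists 0%N => -[[[x a] b] [[y a'] d]].
  by rewrite !inE /= F_RS => /andP[_ /eqP ->]; rewrite eqxx.
- exists 0%N => -[[[x a] b] [[y a'] d]].
  by rewrite !inE /= F_SR => /and3P[_ /eqP -> _]; rewrite eqxx.
- have [k hk] := val_out hv1.
  exists k => -[[[x a] b] [[y a'] d]].
  by rewrite !inE /= F_SR => /andP[-> _]; rewrite hk mul1n.
- exists 0%N => -[[[x a] b] [[y a'] d]].
  by rewrite !inE /= F_SR => /andP[_ /eqP ->]; rewrite eqxx.
- have [c hc] := inter_S hv1 hv2 S_diag.
  exists (2 * c)%N => -[[[x a] b] [[y a'] d]].
  rewrite !inE /= F_SS => /and3P[/eqP -> /eqP -> _].
  by rewrite eqxx mul1n hc // inE.
- exists 0%N => -[[[x a] b] [[y a'] d]].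
  by rewrite !inE /= F_SS => /andP[/negPf h _]; rewrite eq_sym h.
- have [c hc] := inter_S hv1 hv2 hw.
  exists (2 * c)%N => -[[[x a] b] [[y a'] d]].
  rewrite !inE /= F_SS => /andP[hxy /eqP ->].
  by rewrite eqxx mul1n hc.
Qed.


Lemma kind_ne0 R : kinded R -> exists p, p \in R.
Proof.
have [x0 _] : exists x0 : X, x0 \in X by apply/card_gt0P; apply: ltnW.
case=> [[e ->]|[[e ->]|[v hv ->]]].
- by exists ((x0, false, false), (x0, false, e)); rewrite !inE /= !eqxx.
- exists ((x0, false, false), (x0, true, addb (sg (HT H false x0 x0)) e)); rewrite !inE /=.
  by case: (sg _); case: e.
- move: hv; rewrite !inE => /andP[_ hv]; have [[x y] hxy] := S_ne0 hv.
  by exists ((x, false, false), (y, false, false)); rewrite !inE /= hxy.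
Qed.

Lemma kind_transp R : kinded R -> kinded (transp R).
Proof.
case=> [[e ->]|[[e ->]|[v hv ->]]].
- left; exists e; apply/setP => -[[[x a] b] [[y c] d]]; rewrite !inE /=.
  rewrite [x == y]eq_sym [a == c]eq_sym.
  by case: b; case: d; case: e.
- right; left; exists e; apply/setP => -[[[x a] b] [[y c] d]]; rewrite !inE /=.
  by case: a; case: c; rewrite /HT //= [addb d b]addbC.
- right; right; exists (transp v).
    move: hv; rewrite !inE => /andP[hne hv]; rewrite S_tr // andbT.
    apply: contra hne => /eqP h; apply/eqP.
    by rewrite -(transpK v) h; apply/setP => -[x y]; rewrite !inE eq_sym.
  by apply/setP => -[[[x a] b] [[y c] d]]; rewrite !inE /= eq_sym.
Qed.

Lemma main_thm : is_assoc_scheme (SH S H).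
Proof.
split.
- apply/and3P; split.
  + apply/eqP/setP => p; rewrite in_setT; apply/bigcupP.
    case: p => -[[x a] b] [[y c] d].
    case: (eqVneq a c) => [<-|hac].
      case: (eqVneq x y) => [<-|hxy].
        exists (Tr (addb b d)); first by apply: kinded_SH; left; exists (addb b d).
        by rewrite !inE /= !eqxx addKb eqxx.
      have [v hv pv] := S_cover (x, y).
      exists (tilde_rel v); last by rewrite !inE /= pv eqxx.
      apply: kinded_SH; right; right; exists v => //.
      rewrite !inE hv andbT; apply: contraNneq hxy => hd.
      by move: pv; rewrite hd inE.
    exists (Rr (addb (sg (HT H a x y)) (addb b d))).
      by apply: kinded_SH; right; left; eexists.
    by rewrite !inE /= hac /= addbC addbK.
  + apply/trivIsetP => A B hA hB ne.
    rewrite -setI_eq0; apply/eqP/setP => p; rewrite !inE.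
    apply/negP => /andP[pA pB]; move/eqP: ne; apply.
    exact: (kind_uniq (SH_kinded hA) (SH_kinded hB) pA pB).
  + apply/negP => h; have [p] := kind_ne0 (SH_kinded h); by rewrite inE.
- by rewrite /SH !inE; apply/orP; left; rewrite /diagX /tdiag eqxx.
- move=> s hs; exact: kinded_SH (kind_transp (SH_kinded hs)).
- move=> s t u hs ht hu.
  have [c hc] := inter_k (SH_kinded hs) (SH_kinded ht) (SH_kinded hu).
  by exists c => a b hab; exact: (hc (a, b) hab).
Qed.

End Main.

Theorem theorem1p1 (X : finType) (S : {set {set X * X}}) (H : X -> X -> int) :
  (1 < #|X|)%N -> is_assoc_scheme S -> is_hadamard H ->
  is_assoc_scheme (SH S H).
Proof. move=> hn hS hH; exact: main_thm hn hS hH. Qed.
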